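(* Let $S=S(\lambda_1,\ldots,\lambda_d)$ be a spider with $d\ge 2$ legs, and let $S'$ be the spider with $d-1$ legs obtained from $S$ by replacing two legs, of lengths $\lambda_i$ and $\lambda_j$ ($i\neq j$), by a single leg of length $\lambda_i+\lambda_j$ (so $S$ and $S'$ have the same number of vertices). If $S$ has a connected partition of type $\mu$, then $S'$ also has a connected partition of type $\mu$.
   Context: A spider $S(\lambda_1,\ldots,\lambda_d)$, for positive integers $\lambda_1,\ldots,\lambda_d$, is the tree consisting of a vertex $v$ (the center) together with $d$ vertex-disjoint paths (legs) having $\lambda_1,\ldots,\lambda_d$ vertices respectively, where $v$ is joined by an edge to one endpoint of each leg. A connected partition of a graph $G=(V,E)$ is a partition of $V$ into blocks each inducing a connected subgraph; its type is the integer partition of $|V|$ formed by the block sizes in decreasing order. *)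

(* Defs.v *)
From mathcomp Require Import all_boot.
Set Implicit Arguments. Unset Strict Implicit. Unset Printing Implicit Defensive.

Definition induces_connected (T : finType) (e : rel T) (B : {set T}) : bool :=
  [forall x in B, forall y in B,
     connect [rel u v | [&& e u v, u \in B & v \in B]] x y].

Definition connected_partition (T : finType) (e : rel T) (P : {set {set T}}) : bool :=
  partition P [set: T] && [forall B in P, induces_connected e B].

Definition ptype (T : finType) (P : {set {set T}}) : seq nat :=
  sort geq [seq #|B| | B : {set T} in P].

Definition has_cp_of_type (T : finType) (e : rel T) (mu : seq nat) : Prop :=
  exists P : {set {set T}}, connected_partition e P /\ ptype P = mu.

(* Vertices: None = the center; Some (Tagged i p) = the p-th vertex (0-based,
   p < lam_i) of leg i, vertex 0 of each leg being the one joined to the center. *)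
Definition spider_vertex (lam : seq nat) : finType :=
  option {i : 'I_(size lam) & 'I_(nth 0 lam i)}.

Definition spider_adj (lam : seq nat) : rel (spider_vertex lam) :=
  fun x y =>
    match x, y with
    | None, None => false
    | None, Some v => val (tagged v) == 0
    | Some u, None => val (tagged u) == 0
    | Some u, Some v =>
        (tag u == tag v) &&
        ((val (tagged u) == (val (tagged v)).+1) ||
         (val (tagged v) == (val (tagged u)).+1))
    end.

Definition merge_legs (lam : seq nat) (i j : nat) : seq nat :=
  (nth 0 lam i + nth 0 lam j) ::
    [seq nth 0 lam k | k <- iota 0 (size lam) & (k != i) && (k != j)].

(* Main.v *)
Require Import Defs.
From mathcomp Require Import all_boot zify.
Set Implicit Arguments. Unset Strict Implicit. Unset Printing Implicit Defensive.

Lemma connect_map (T T' : finType) (R : rel T) (R' : rel T') (g : T -> T') :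
  (forall x y, R x y -> connect R' (g x) (g y)) ->
  forall x y, connect R x y -> connect R' (g x) (g y).
Proof.
move=> H x y /connectP [p]; elim: p x => [|z p IH] x /=; first by move=> _ ->.
case/andP => Rxz pz Ey; apply: connect_trans (H _ _ Rxz) (IH _ pz Ey).
Qed.

Lemma transfer (T T' : finType) (e : rel T) (e' : rel T') (g : T -> T') (f : T' -> T)
  (P : {set {set T}}) :
  cancel g f -> cancel f g -> connected_partition e P ->
  (forall C : {set T}, C \in P -> forall x y, x \in C -> y \in C -> e x y ->
     connect [rel u v | [&& e' u v, u \in g @: C & v \in g @: C]] (g x) (g y)) ->
  has_cp_of_type e' (ptype P).
Proof.
move=> gK fK /andP [partP /forallP connP] H.
have ginj : injective g by exact: can_inj gK.
exists [set g @: (C : {set T}) | C in P]; split.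
  apply/andP; split.
    have -> : [set: T'] = g @: [set: T].
      apply/setP => y; rewrite inE; apply/esym/imsetP; exists (f y) => //.
    by rewrite imset_partition.
  apply/forallP => C'; apply/implyP => /imsetP [C CP ->].
  apply/forallP => x'; apply/implyP => /imsetP [x xC ->].
  apply/forallP => y'; apply/implyP => /imsetP [y yC ->].
  have := connP C; rewrite CP /= => /forallP /(_ x); rewrite xC /= => /forallP /(_ y).
  rewrite yC /=; apply: connect_map => u v /= /and3P [euv uC vC].
  exact: H.
rewrite /ptype; apply/perm_sortP.
- by move=> a b; apply: leq_total.
- by move=> a b c h1 h2; apply: leq_trans h2 h1.
- by move=> a b /andP [h1 h2]; apply/eqP; rewrite eqn_leq; apply/andP; split.
have iinj := imset_inj ginj.
have pe : perm_eq (enum [set g @: (C : {set T}) | C in P]) (map (fun C : {set T} => g @: C) (enum P)).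
  apply: uniq_perm; first exact: enum_uniq.
    by rewrite (map_inj_uniq iinj) enum_uniq.
  move=> C'; rewrite mem_enum; apply/imsetP/mapP => [[C CP ->]|[C CP ->]];
    by exists C; rewrite ?mem_enum in CP *.
apply: perm_trans (perm_map (fun B : {set T'} => #|B|) pe) _; rewrite -map_comp.
rewrite (eq_map (g := fun B : {set T} => #|B|)) // => C /=; exact: card_imset.
Qed.

Definition code lam (x : spider_vertex lam) : option (nat * nat) :=
  if x is Some u then Some (val (tag u), val (tagged u)) else None.
Definition valid (lam : seq nat) (c : option (nat * nat)) : bool :=
  if c is Some (k, p) then (k < size lam) && (p < nth 0 lam k) else true.
Definition adjc (c d : option (nat * nat)) : bool :=
  match c, d with
  | None, None => false
  | None, Some (_, q) => q == 0
  | Some (_, p), None => p == 0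
  | Some (k, p), Some (l, q) => (k == l) && ((p == q.+1) || (q == p.+1))
  end.

Lemma code_inj lam : injective (@code lam).
Proof.
case=> [[k p]|] [[l q]|] //= [] Ekl Epq.
have E : k = l by apply: val_inj.
subst l; have -> : p = q by apply: val_inj.
by [].
Qed.

Lemma code_valid lam (x : spider_vertex lam) : valid lam (code x).
Proof. by case: x => [[k p]|] //=; rewrite ltn_ord /=. Qed.

Lemma code_surj lam c : valid lam c -> exists x : spider_vertex lam, code x = c.
Proof.
case: c => [[k p]|]; last by exists None.
move=> /andP [kl pl].
by exists (Some (@Tagged _ (Ordinal kl) (fun k : 'I_(size lam) => 'I_(nth 0 lam k)) (Ordinal pl))).
Qed.

Lemma code_adj lam (x y : spider_vertex lam) : spider_adj x y = adjc (code x) (code y).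
Proof. by case: x => [[k p]|]; case: y => [[l q]|]. Qed.

Definition ks (lam : seq nat) (i j : nat) :=
  [seq k <- iota 0 (size lam) | (k != i) && (k != j)].

Definition gc (lam : seq nat) (i j ai aj : nat) (c : option (nat * nat)) :=
  match c with
  | None => None
  | Some (k, p) => Some
     (if k == i then (0, if p < ai then p else p + aj)
      else if k == j then (0, if p < aj then ai + p else nth 0 lam i + p)
      else ((index k (ks lam i j)).+1, p))
  end.

Definition fc (lam : seq nat) (i j ai aj : nat) (c : option (nat * nat)) :=
  match c with
  | None => None
  | Some (0, q) => Some
     (if q < ai then (i, q) else if q < ai + aj then (j, q - ai)
      else if q < nth 0 lam i + aj then (i, q - aj) else (j, q - nth 0 lam i))
  | Some (t.+1, q) => Some (nth 0 (ks lam i j) t, q)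
  end.

Lemma merge_eq lam i j :
  merge_legs lam i j = (nth 0 lam i + nth 0 lam j) :: map (nth 0 lam) (ks lam i j).
Proof. by []. Qed.

Lemma mem_ks lam i j k : (k \in ks lam i j) = [&& k < size lam, k != i & k != j].
Proof. by rewrite mem_filter mem_iota /= add0n andbC. Qed.

Lemma gc_valid lam i j ai aj c : i < size lam -> j < size lam -> i != j ->
  ai <= nth 0 lam i -> aj <= nth 0 lam j ->
  valid lam c -> valid (merge_legs lam i j) (gc lam i j ai aj c).
Proof.
move=> il jl ij ail ajl; case: c => [[k p]|] //= /andP [kl pl].
rewrite merge_eq.
case: (k =P i) => [Eki|ki] /=; first subst k. case: ifP => /=; lia.
case: (k =P j) => [Ekj|kj] /=; first subst k. case: ifP => /=; lia.
have kk : k \in ks lam i j by rewrite mem_ks kl; apply/and3P; split => //; apply/eqP.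
by rewrite ltnS size_map -/(ks lam i j) index_mem kk /= (nth_map 0) ?index_mem // nth_index.
Qed.

Lemma fc_valid lam i j ai aj c : i < size lam -> j < size lam -> i != j ->
  ai <= nth 0 lam i -> aj <= nth 0 lam j ->
  valid (merge_legs lam i j) c -> valid lam (fc lam i j ai aj c).
Proof.
move=> il jl ij ail ajl; case: c => [[[|t] q]|] //=.
  move=> ql; case: ifP => /= h; first by rewrite il; lia.
  case: ifP => /= h1; first by rewrite jl; lia.
  case: ifP => /= h2; first by rewrite il; lia.
  by rewrite jl; lia.
rewrite ltnS size_map -/(ks lam i j) => /andP [tl ql].
have : nth 0 (ks lam i j) t \in ks lam i j by rewrite mem_nth.
rewrite mem_ks => /and3P [-> _ _] /=.
by rewrite (nth_map 0) in ql.
Qed.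

Lemma fcK lam i j ai aj c : i < size lam -> j < size lam -> i != j ->
  ai <= nth 0 lam i -> aj <= nth 0 lam j ->
  valid lam c -> fc lam i j ai aj (gc lam i j ai aj c) = c.
Proof.
move=> il jl ij ail ajl; case: c => [[k p]|] //= /andP [kl pl].
case: (k =P i) => [Eki|ki] /=; first subst k.
  case: (ltnP p ai) => h; first by rewrite h.
  have -> : (p + aj < ai) = false by lia.
  have -> : (p + aj < ai + aj) = false by lia.
  have -> : (p + aj < nth 0 lam i + aj) = true by lia.
  by rewrite addnK.
case: (k =P j) => [Ekj|kj] /=; first subst k.
  case: (ltnP p aj) => h.
    have -> : (ai + p < ai) = false by lia.
    have -> : (ai + p < ai + aj) = true by lia.
    by rewrite addKn.
  have -> : (nth 0 lam i + p < ai) = false by lia.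
  have -> : (nth 0 lam i + p < ai + aj) = false by lia.
  have -> : (nth 0 lam i + p < nth 0 lam i + aj) = false by lia.
  by rewrite addKn.
have kk : k \in ks lam i j by rewrite mem_ks kl; apply/and3P; split => //; apply/eqP.
by rewrite nth_index.
Qed.

Lemma gcK lam i j ai aj c : i < size lam -> j < size lam -> i != j ->
  ai <= nth 0 lam i -> aj <= nth 0 lam j ->
  valid (merge_legs lam i j) c -> gc lam i j ai aj (fc lam i j ai aj c) = c.
Proof.
move=> il jl ij ail ajl; case: c => [[[|t] q]|] //=.
  move=> ql; case: ifP => /= h1; first by rewrite eqxx h1.
  case: ifP => /= h2.
    rewrite eq_sym (negbTE ij) eqxx.
    have -> : q - ai < aj by lia.
    congr (Some (_, _)); lia.
  case: ifP => /= h3.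
    rewrite eqxx; have -> : q - aj < ai = false by lia.
    congr (Some (_, _)); lia.
  rewrite eq_sym (negbTE ij) eqxx; have -> : q - nth 0 lam i < aj = false by lia.
  congr (Some (_, _)); lia.
rewrite ltnS size_map -/(ks lam i j) => /andP [tl ql].
have : nth 0 (ks lam i j) t \in ks lam i j by rewrite mem_nth.
rewrite mem_ks => /and3P [_ /negbTE -> /negbTE ->].
rewrite index_uniq //; rewrite filter_uniq // iota_uniq //.
Qed.

Lemma test (x y : nat) : (x == y.+1) || (y == x.+1) -> x < y -> (x + 3 == y + 3) || (y+3 == (x+3).+1).
Proof. move=> h1 h2. lia. Qed.

Lemma gc_adj lam i j ai aj (inB : option (nat * nat) -> bool) c d :
  i < size lam -> j < size lam -> i != j ->
  ai <= nth 0 lam i -> aj <= nth 0 lam j -> 0 < nth 0 lam i -> 0 < nth 0 lam j ->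
  inB None ->
  (forall p, p < ai -> inB (Some (i, p))) -> (ai < nth 0 lam i -> ~~ inB (Some (i, ai))) ->
  (forall p, p < aj -> inB (Some (j, p))) -> (aj < nth 0 lam j -> ~~ inB (Some (j, aj))) ->
  valid lam c -> valid lam d -> adjc c d -> inB c = inB d ->
  [|| adjc (gc lam i j ai aj c) (gc lam i j ai aj d),
      (c == None) && (d == Some (j, 0)) | (d == None) && (c == Some (j, 0))].
Proof.
move=> il jl ij ail ajl li lj BN Bi Bi' Bj Bj'.
have ai0 : inB (Some (i, 0)) -> 0 < ai.
  move=> h; case: (posnP ai) => // a0; move: (Bi'); rewrite a0 => /(_ li).
  by rewrite h.
case: c => [[k p]|]; case: d => [[l q]|] //=.
- move=> /andP [kl pl] /andP [ll ql] /andP [/eqP Ekl adj] E; subst l.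
  case: (k =P i) => [Eki|ki] /=.
    subst k.
    have Epq : (p < ai) = (q < ai).
      apply/idP/idP => h; apply/negP => /negP; rewrite -leqNgt => h'.
        have Eq : q = ai by lia.
        have Ep : p < ai by lia.
        by move: E; rewrite (Bi _ Ep) Eq; move: (Bi' ltac:(lia)) => /negbTE ->.
      have Ep : p = ai by lia.
      by move: E; rewrite (Bi _ h) Ep; move: (Bi' ltac:(lia)) => /negbTE ->.
    rewrite Epq; case: ifP => _; lia.
  case: (k =P j) => [Ekj|kj] /=.
    subst k.
    have Epq : (p < aj) = (q < aj).
      apply/idP/idP => h; apply/negP => /negP; rewrite -leqNgt => h'.
        have Eq : q = aj by lia.
        have Ep : p < aj by lia.
        by move: E; rewrite (Bj _ Ep) Eq; move: (Bj' ltac:(lia)) => /negbTE ->.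
      have Ep : p = aj by lia.
      by move: E; rewrite (Bj _ h) Ep; move: (Bj' ltac:(lia)) => /negbTE ->.
    rewrite Epq; case: ifP => _; lia.
  by rewrite eqxx adj.
- move=> /andP [kl pl] _ /eqP p0 E; subst p.
  case: (k =P i) => [Eki|ki] /=.
    by subst k; rewrite E in ai0; rewrite (ai0 BN).
  case: (k =P j) => [Ekj|kj] /=; first by subst k; rewrite eqxx orbT.
  by [].
- move=> _ /andP [kl pl] /eqP p0 E; subst q.
  case: (l =P i) => [Eki|ki] /=.
    by subst l; rewrite -E in ai0; rewrite (ai0 BN).
  case: (l =P j) => [Ekj|kj] /=; first by subst l; rewrite eqxx orbT.
  by [].
Qed.

Definition gmap lam lam' (gcf : option (nat * nat) -> option (nat * nat))
  (x : spider_vertex lam) : spider_vertex lam' :=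
  odflt None [pick y : spider_vertex lam' | code y == gcf (code x)].

Lemma gmapE lam lam' gcf (x : spider_vertex lam) :
  valid lam' (gcf (code x)) -> code (@gmap lam lam' gcf x) = gcf (code x).
Proof.
move=> /code_surj [y Ey]; rewrite /gmap; case: pickP => [z /eqP //|/(_ y)].
by rewrite Ey eqxx.
Qed.

Lemma adjc_sym c d : adjc c d = adjc d c.
Proof.
case: c => [[k p]|]; case: d => [[l q]|] //=; by rewrite eq_sym orbC.
Qed.

Theorem proposition6p1 (lam : seq nat) (i j : nat) (mu : seq nat) :
  2 <= size lam ->
  all (fun l => 0 < l) lam ->
  i < size lam -> j < size lam -> i != j ->
  has_cp_of_type (@spider_adj lam) mu ->
  has_cp_of_type (@spider_adj (merge_legs lam i j)) mu.
Proof.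
move=> _ /allP pos il jl ij [P [cpP <-]].
have li : 0 < nth 0 lam i by apply: pos; rewrite mem_nth.
have lj : 0 < nth 0 lam j by apply: pos; rewrite mem_nth.
have partP := cpP; move/andP: partP => [partP _].
move/and3P: (partP) => [/eqP covP trivP _].
pose B := pblock P (None : spider_vertex lam).
have BP : B \in P by apply: pblock_mem; rewrite covP inE.
have NB : (None : spider_vertex lam) \in B by rewrite mem_pblock covP inE.
pose inB (c : option (nat * nat)) := [exists x in B, code x == c].
have inBE : forall x, inB (code x) = (x \in B).
  move=> x; apply/existsP/idP => [[y /andP [yB /eqP /code_inj <-]] //|xB].
  by exists x; rewrite xB eqxx.
pose ai := find (fun p => ~~ inB (Some (i, p))) (iota 0 (nth 0 lam i)).
pose aj := find (fun p => ~~ inB (Some (j, p))) (iota 0 (nth 0 lam j)).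
have ail : ai <= nth 0 lam i by by have := find_size (fun p => ~~ inB (Some (i, p))) (iota 0 (nth 0 lam i)); rewrite size_iota.
have ajl : aj <= nth 0 lam j by by have := find_size (fun p => ~~ inB (Some (j, p))) (iota 0 (nth 0 lam j)); rewrite size_iota.
have Bi : forall p, p < ai -> inB (Some (i, p)).
  move=> p pa; have := before_find 0 pa; rewrite nth_iota ?add0n; last by lia.
  by move/negbFE.
have Bj : forall p, p < aj -> inB (Some (j, p)).
  move=> p pa; have := before_find 0 pa; rewrite nth_iota ?add0n; last by lia.
  by move/negbFE.
have Bi' : ai < nth 0 lam i -> ~~ inB (Some (i, ai)).
  move=> h; have := @nth_find _ 0 (fun p => ~~ inB (Some (i, p))) (iota 0 (nth 0 lam i)).
  by rewrite has_find size_iota nth_iota ?add0n //; apply.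
have Bj' : aj < nth 0 lam j -> ~~ inB (Some (j, aj)).
  move=> h; have := @nth_find _ 0 (fun p => ~~ inB (Some (j, p))) (iota 0 (nth 0 lam j)).
  by rewrite has_find size_iota nth_iota ?add0n //; apply.
have BN : inB None by rewrite -[None]/(code (None : spider_vertex lam)) inBE.
pose g := @gmap lam (merge_legs lam i j) (gc lam i j ai aj).
pose f := @gmap (merge_legs lam i j) lam (fc lam i j ai aj).
have gE : forall x, code (g x) = gc lam i j ai aj (code x).
  by move=> x; apply: gmapE; apply: gc_valid => //; apply: code_valid.
have fE : forall x, code (f x) = fc lam i j ai aj (code x).
  by move=> x; apply: gmapE; apply: fc_valid => //; apply: code_valid.
have gK : cancel g f.
  by move=> x; apply: code_inj; rewrite fE gE fcK // code_valid.
have fK : cancel f g.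
  by move=> x; apply: code_inj; rewrite gE fE gcK // code_valid.
apply: (transfer gK fK cpP) => C CP.
have CB : forall z, z \in C -> (z \in B) = (C == B).
  move=> z zC; apply/idP/eqP => [zB|E]; last by rewrite -E.
  by rewrite -(def_pblock trivP CP zC) (def_pblock trivP BP zB).
pose R' := [rel u v | [&& spider_adj u v, u \in g @: C & v \in g @: C]].
have symR : symmetric R'.
  move=> u v /=; rewrite code_adj adjc_sym -code_adj.
  by case: (u \in g @: C); case: (v \in g @: C); rewrite ?andbF ?andbT.
have key : forall x y, x \in C -> y \in C -> code x = None -> code y = Some (j, 0) ->
    connect R' (g x) (g y).
  move=> x y xC yC cx cy.
  have xB : x \in B by rewrite -inBE cx BN.
  have /eqP CeB : C == B by rewrite -(CB x xC).
  have yB : y \in B by rewrite -CeB.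
  have aj0 : 0 < aj.
    case: (posnP aj) => // a0; move: (Bj'); rewrite a0 => /(_ lj).
    by rewrite -cy inBE yB.
  have memg : forall z', (exists2 q, q <= ai & code z' = Some (0, q)) -> z' \in g @: C.
    move=> z' [q qa cz]; rewrite -(fK z') imset_f // CeB -inBE fE cz /=.
    case: ifP => h; first by apply: Bi.
    have -> : q < ai + aj by move: h qa aj0; clear; lia.
    have -> : q - ai = 0 by move: h qa; clear; lia.
    exact: Bj.
  have gxC : g x \in g @: C by rewrite imset_f.
  have path : forall q, q <= ai -> forall z', code z' = Some (0, q) -> connect R' (g x) z'.
    elim => [|q IH] qa z' cz.
      apply: connect1; rewrite /= code_adj cz gE cx gxC memg //; by exists 0.
    have [z'' cz''] : exists z'' : spider_vertex (merge_legs lam i j), code z'' = Some (0, q).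
      apply: code_surj => /=; move: qa ail lj; clear; lia.
    apply: connect_trans (IH (ltnW qa) z'' cz'') (connect1 _).
    have m1 : z'' \in g @: C by apply: memg; exists q => //; apply: ltnW.
    have m2 : z' \in g @: C by apply: memg; exists q.+1.
    by rewrite /= code_adj cz'' cz m1 m2 /= eqxx orbT.
  by apply: (path ai (leqnn ai) (g y)); rewrite gE cy /= eq_sym (negbTE ij) eqxx aj0 addn0.
move=> x y xC yC exy.
have Ein : inB (code x) = inB (code y) by rewrite !inBE (CB x xC) (CB y yC).
have := gc_adj il jl ij ail ajl li lj BN Bi Bi' Bj Bj' (code_valid x) (code_valid y)
   (etrans (esym (code_adj x y)) exy) Ein.
case/or3P => [adj | /andP [/eqP cx /eqP cy] | /andP [/eqP cy /eqP cx]].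
- by apply: connect1; rewrite /= code_adj !gE adj !imset_f.
- exact: key.
- by rewrite (sym_connect_sym symR); apply: key.
Qed.
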